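(* Let $\mathcal F\subset 2^{[n]}$, let $i\in[n]$, and let $\mathcal G=S_i(\mathcal F)$. Then for every positive integer $r$, $$\max\{|W(F_1,\ldots,F_r)|: F_1,\ldots,F_r\in\mathcal F\}\ \ge\ \max\{|W(G_1,\ldots,G_r)|: G_1,\ldots,G_r\in\mathcal G\}.$$
   Context: For sets $A_1,\ldots,A_r\subset[n]$, $W(A_1,\ldots,A_r)=(A_1\cup\cdots\cup A_r)\setminus(A_1\cap\cdots\cap A_r)$. For $\mathcal F\subset 2^{[n]}$ and $i\in[n]$, let $\mathcal F(i)=\{F\setminus\{i\}: i\in F\in\mathcal F\}$ and $\mathcal F(\bar i)=\{F\in\mathcal F: i\notin F\}$, both subfamilies of $2^{[n]\setminus\{i\}}$; a family $\mathcal G\subset 2^{[n]}$ is uniquely determined by $\mathcal G(i)$ and $\mathcal G(\bar i)$. The squashed family $S_i(\mathcal F)$ is the unique family $\mathcal G\subset 2^{[n]}$ with $\mathcal G(i)=\mathcal F(i)\cap\mathcal F(\bar i)$ and $\mathcal G(\bar i)=\mathcal F(i)\cup\mathcal F(\bar i)$. In the maxima the $r$ sets need not be distinct. *)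

(* Defs.v *)
From mathcomp Require Import all_boot.
Set Implicit Arguments. Unset Strict Implicit. Unset Printing Implicit Defensive.

Definition W (n r : nat) (A : {ffun 'I_r -> {set 'I_n}}) : {set 'I_n} :=
  (\bigcup_(j < r) A j) :\: (\bigcap_(j < r) A j).

Definition sec_in (n : nat) (F : {set {set 'I_n}}) (i : 'I_n) : {set {set 'I_n}} :=
  [set A :\ i | A in F & i \in A].

Definition sec_out (n : nat) (F : {set {set 'I_n}}) (i : 'I_n) : {set {set 'I_n}} :=
  [set A in F | i \notin A].

Definition squash (n : nat) (i : 'I_n) (F : {set {set 'I_n}}) : {set {set 'I_n}} :=
  [set A : {set 'I_n} |
    if i \in A then (A :\ i) \in sec_in F i :&: sec_out F i
    else A \in sec_in F i :|: sec_out F i].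

(* max{ |W(F_1..F_r)| : F_1..F_r in F } (0 if F is empty) *)
Definition maxW (n r : nat) (F : {set {set 'I_n}}) : nat :=
  \max_(A : {ffun 'I_r -> {set 'I_n}} | [forall j, A j \in F]) #|W A|.

(* Main.v *)
Require Import Defs.
From mathcomp Require Import all_boot.

Lemma memW n r (A : {ffun 'I_r -> {set 'I_n}}) x :
  (x \in W A) = [exists j, x \in A j] && ~~ [forall j, x \in A j].
Proof.
rewrite /W inE andbC; congr (_ && ~~ _).
- by apply/bigcupP/existsP => [[j _ h]|[j h]]; exists j.
- by apply/bigcapP/forallP => [H j|H j _]; [exact: H | exact: H].
Qed.

Lemma WD1 n r (A B : {ffun 'I_r -> {set 'I_n}}) i :
  (forall j, A j :\ i = B j :\ i) -> W A :\ i = W B :\ i.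
Proof.
move=> H; apply/setP => x; rewrite !in_setD1; case: eqP => //= /eqP xi.
have E j : (x \in A j) = (x \in B j).
  by move/setP/(_ x): (H j); rewrite !in_setD1 xi.
by rewrite !memW (eq_existsb E) (eq_forallb E).
Qed.

Lemma mem_sec_in n (F : {set {set 'I_n}}) i B :
  (B \in sec_in F i) = (i \notin B) && (i |: B \in F).
Proof.
apply/imsetP/andP => [[A]|[iB BF]].
  rewrite inE => /andP [AF iA] ->; split; first by rewrite setD11.
  by rewrite setD1K.
exists (i |: B); first by rewrite inE BF setU11.
by rewrite setU1K.
Qed.

Lemma sq_mem n (F : {set {set 'I_n}}) i G : G \in squash i F ->
  (G \in F \/ i |: G \in F) /\ (i \in G -> G \in F /\ G :\ i \in F).
Proof.
rewrite /squash inE; case: ifP => iG.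
  rewrite inE mem_sec_in /sec_out setD1K // inE => /andP [/andP [_ GF] G1F].
  by move: G1F; rewrite inE => /andP [G1F _]; split; [left|].
rewrite inE mem_sec_in /sec_out inE iG /= andbT => /orP [] h; split=> //; tauto.
Qed.

Lemma U1D1 n (i : 'I_n) (G : {set 'I_n}) : (i |: G) :\ i = G :\ i.
Proof. by apply/setP => x; rewrite !inE; case: eqP. Qed.

Lemma D1D1 n (i : 'I_n) (G : {set 'I_n}) : (G :\ i) :\ i = G :\ i.
Proof. by apply/setP => x; rewrite !inE; case: eqP. Qed.

Lemma D1id n (i : 'I_n) (G : {set 'I_n}) : i \notin G -> G :\ i = G.
Proof. by move=> iG; apply/setP => x; rewrite !inE; case: eqP => // ->; rewrite (negbTE iG). Qed.

Theorem lemma1 (n : nat) (F : {set {set 'I_n}}) (i : 'I_n) (r : nat) :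
  0 < r -> maxW r (squash i F) <= maxW r F.
Proof.
move=> r0; apply/bigmax_leqP => G /forallP HG.
have sq j := @sq_mem _ _ _ _ (HG j).
pose c1 := [ffun j => if G j \in F then G j else i |: G j].
pose c2 := [ffun j => if G j :\ i \in F then G j :\ i else i |: G j].
have c1F j : c1 j \in F.
  rewrite ffunE; case: ifP => // GF; have [[]] := sq j; by rewrite ?GF.
have c2F j : c2 j \in F.
  rewrite ffunE; case: ifP => // GF; have [h1 h2] := sq j.
  case: (boolP (i \in G j)) => iG; first by case: (h2 iG); rewrite GF.
  by rewrite D1id // in GF; case: h1; rewrite ?GF.
have e1 : W c1 :\ i = W G :\ i.
  by apply: WD1 => j; rewrite ffunE; case: ifP => _; rewrite ?U1D1.
have e2 : W c2 :\ i = W G :\ i.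
  by apply: WD1 => j; rewrite ffunE; case: ifP => _; rewrite ?U1D1 ?D1D1.
have le (c : {ffun 'I_r -> {set 'I_n}}) : (forall j, c j \in F) -> #|W c| <= maxW r F.
  by move=> cF; apply: leq_bigmax_cond; apply/forallP.
rewrite (cardsD1 i (W G)).
case: (boolP (i \in W G)) => iW; last first.
  by rewrite add0n -e1 (leq_trans _ (le _ c1F)) // subset_leq_card // subD1set.
suff : exists c : {ffun 'I_r -> {set 'I_n}}, (forall j, c j \in F) /\ i \in W c /\ W c :\ i = W G :\ i.
  case=> c [cF [ic ec]]; rewrite -ec; have := cardsD1 i (W c); rewrite ic => <-; exact: le.
move: iW; rewrite memW => /andP [/existsP [a ia] /forallP nb].
have [b ib] : exists b, i \notin G b.
  case: (boolP [exists b, i \notin G b]) => [/existsP //|].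
  by rewrite negb_exists => /forallP h; case: nb => j; move: (h j); rewrite negbK.
case: (boolP [exists j, i \notin c1 j]) => ex.
  exists c1; split=> //; split=> //; rewrite memW ex andbT.
  apply/existsP; exists a; rewrite ffunE; have [_ /(_ ia) [-> _]] := sq a; done.
rewrite negb_exists in ex; move/forallP: ex => ex.
exists c2; split=> //; split=> //; rewrite memW; apply/andP; split.
  apply/existsP; exists b; move: (ex b); rewrite !ffunE D1id //.
  by case: ifP => // _; rewrite negbK.
apply/forallP => h; move: (h a); rewrite ffunE.
have [_ /(_ ia) [_ ->]] := sq a; by rewrite setD11.
Qed.
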